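(* Let $M\in\mathbb S^n$ with largest eigenvalue $\lambda_1>0$ and smallest eigenvalue $\lambda_n\le0$, $\beta\in\mathbb R^n$, $\gamma\in\mathbb R$, $\phi(x)=x^TMx-2\beta^Tx+\gamma$, $\mathcal Q=\{x:\phi(x)\le0\}$. Let $x_0\in\mathcal Q$, $r>0$, and let $u_n$ be a unit eigenvector of $M$ for $\lambda_n$. Denote by $B(y,r)$ the closed Euclidean ball of radius $r$ around $y$. (i) If $\lambda_n=0$ and $\beta^Tu_n>0$, then for all $\theta\ge\Theta_0:=\dfrac{r^2\lambda_1+2r\|Mx_0-\beta\|_2}{2\beta^Tu_n}$ we have $B(x_0+\theta u_n,r)\subseteq\mathcal Q$. (ii) If $\lambda_n<0$ (and $u_n$ is normalized so that $\beta^Tu_n\ge0$), let $b_0:=\lambda_nx_0^Tu_n-\beta^Tu_n+r|\lambda_n|$ and $$\Theta_-:=\frac{-b_0-\sqrt{b_0^2-\lambda_n(r^2\lambda_1+2r\|Mx_0-\beta\|_2)}}{\lambda_n}.$$ Then for all $\theta\ge\Theta_-$ we have $B(x_0+\theta u_n,r)\subseteq\mathcal Q$.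
   Context: $\mathbb S^n$ denotes the real symmetric $n\times n$ matrices. *)

(* Defs.v *)
From HB Require Import structures.
From mathcomp Require Import all_boot all_order all_algebra.
Set Implicit Arguments. Unset Strict Implicit. Unset Printing Implicit Defensive.
Import Order.TTheory GRing.Theory Num.Theory.
Local Open Scope ring_scope.

Definition dotv (R : rcfType) (n : nat) (x y : 'cV[R]_n) : R := (x^T *m y) 0 0.

Definition norm2 (R : rcfType) (n : nat) (x : 'cV[R]_n) : R := Num.sqrt (dotv x x).

Definition phi (R : rcfType) (n : nat) (M : 'M[R]_n) (beta : 'cV[R]_n) (gamma : R)
  (x : 'cV[R]_n) : R := dotv x (M *m x) - 2 * dotv beta x + gamma.

Definition inQ (R : rcfType) (n : nat) (M : 'M[R]_n) (beta : 'cV[R]_n) (gamma : R)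
  (x : 'cV[R]_n) : Prop := phi M beta gamma x <= 0.

Definition inBall (R : rcfType) (n : nat) (y : 'cV[R]_n) (r : R) (x : 'cV[R]_n) : Prop :=
  norm2 (x - y) <= r.

(* Main.v *)
Require Import Defs.
From HB Require Import structures.
From mathcomp Require Import all_boot all_order all_algebra.
From mathcomp Require Import ring lra.
Import Order.TTheory GRing.Theory Num.Theory.
Local Open Scope ring_scope.
Set Implicit Arguments. Unset Strict Implicit. Unset Printing Implicit Defensive.
From mathcomp Require Import complex.

Section Dot.
Variables (R : rcfType) (n : nat).
Implicit Types (x y z : 'cV[R]_n) (a : R).

Lemma dotvE x y : dotv x y = \sum_i x i 0 * y i 0.
Proof. by rewrite /dotv mxE; apply: eq_bigr => i _; rewrite mxE. Qed.

Lemma dotvDl x y z : dotv (x + y) z = dotv x z + dotv y z.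
Proof. by rewrite !dotvE -big_split; apply: eq_bigr => i _; rewrite mxE mulrDl. Qed.
Lemma dotvDr x y z : dotv z (x + y) = dotv z x + dotv z y.
Proof. by rewrite !dotvE -big_split; apply: eq_bigr => i _; rewrite mxE mulrDr. Qed.
Lemma dotvZl a x z : dotv (a *: x) z = a * dotv x z.
Proof. by rewrite !dotvE mulr_sumr; apply: eq_bigr => i _; rewrite mxE mulrA. Qed.
Lemma dotvZr a x z : dotv z (a *: x) = a * dotv z x.
Proof. by rewrite !dotvE mulr_sumr; apply: eq_bigr => i _; rewrite mxE mulrCA. Qed.
Lemma dotvNl x z : dotv (- x) z = - dotv x z.
Proof. by rewrite -scaleN1r dotvZl mulN1r. Qed.
Lemma dotvNr x z : dotv z (- x) = - dotv z x.
Proof. by rewrite -scaleN1r dotvZr mulN1r. Qed.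
Lemma dotvC x y : dotv x y = dotv y x.
Proof. by rewrite !dotvE; apply: eq_bigr => i _; rewrite mulrC. Qed.
Lemma dotvM (M : 'M[R]_n) x y : M^T = M -> dotv x (M *m y) = dotv (M *m x) y.
Proof. by move=> Ms; rewrite /dotv trmx_mul Ms mulmxA. Qed.
Lemma dotv_ge0 x : 0 <= dotv x x.
Proof. by rewrite dotvE; apply: sumr_ge0 => i _; rewrite -expr2 sqr_ge0. Qed.
Lemma mul_self_ge0' a : 0 <= a * a.
Proof. by rewrite -expr2 sqr_ge0. Qed.
Lemma dotv_eq0 x : dotv x x = 0 -> x = 0.
Proof.
rewrite dotvE => H; apply/matrixP => i j; rewrite ord1 mxE.
have := @psumr_eq0P _ _ predT (fun i => x i 0 * x i 0) (fun i _ => mul_self_ge0' (x i 0)) H i isT.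
by move=> /eqP; rewrite -expr2 sqrf_eq0 => /eqP.
Qed.
Lemma dotv0r x : dotv x 0 = 0.
Proof. by rewrite dotvE big1 // => i _; rewrite mxE mulr0. Qed.

Lemma cs x y : dotv x y ^+ 2 <= dotv x x * dotv y y.
Proof.
have [/dotv_eq0 ->|] := eqVneq (dotv y y) 0; first by rewrite dotv0r expr0n /= dotv0r mulr0.
move=> yy0; have yyp : 0 < dotv y y by rewrite lt_def yy0 dotv_ge0.
have := dotv_ge0 (dotv y y *: x - dotv x y *: y).
rewrite !(dotvDl, dotvDr, dotvNl, dotvNr, dotvZl, dotvZr) (dotvC y x).
move=> H.
have : 0 <= dotv y y * (dotv y y * dotv x x - dotv x y ^+ 2) by lra.
by rewrite pmulr_rge0 // subr_ge0 mulrC.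
Qed.

Lemma cs_abs x y : `|dotv x y| <= norm2 x * norm2 y.
Proof.
rewrite /norm2 -sqrtrM ?dotv_ge0 // -sqrtr_sqr; exact: ler_wsqrtr (cs x y).
Qed.

Lemma norm2_sq x : norm2 x ^+ 2 = dotv x x.
Proof. by rewrite /norm2 sqr_sqrtr // dotv_ge0. Qed.
Lemma norm2_ge0 x : 0 <= norm2 x.
Proof. exact: sqrtr_ge0. Qed.
End Dot.
Lemma fC_real (R : rcfType) (a : R) : (a%:C)%C \is Num.real.
Proof.
rewrite realE -[0 : R[i]]/((0 : R)%:C)%C !lecR; exact: le_total.
Qed.

Lemma Creal_eq (R : rcfType) (z : R[i]) : z \is Num.real -> z = ((complex.Re z)%:C)%C.
Proof.
case: z => a b; rewrite realE -[0 : R[i]]/((0 : R)%:C)%C !lecE /=.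
by case/orP => /andP[/eqP H _]; rewrite ?H // -H.
Qed.

Lemma eig_map (R : rcfType) n (M : 'M[R]_n) (a : R) :
  eigenvalue (map_mx (real_complex R) M) ((a%:C)%C) -> eigenvalue M a.
Proof.
rewrite !eigenvalue_root_char -map_char_poly.
by rewrite fmorph_root.
Qed.

Lemma rayleigh (R : rcfType) n (M : 'M[R]_n) (l1 : R) :
  M^T = M -> (forall mu, eigenvalue M mu -> mu <= l1) ->
  forall x : 'cV[R]_n, (x^T *m M *m x) 0 0 <= l1 * (x^T *m x) 0 0.
Proof.
move=> Msym Hl1 x.
pose f := real_complex R.
set A := map_mx f M.
have Aherm : A \is hermsymmx.
  apply/is_hermitianmxP; rewrite expr0 scale1r; apply/matrixP => i j.
  rewrite !mxE conj_Creal ?fC_real //.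
  by rewrite -{1}Msym mxE.
have /orthomx_spectralP HA := hermitian_normalmx Aherm.
set P := spectralmx A in HA; set d := spectral_diag A in HA.
have Pu : P \is unitarymx := spectral_unitarymx A.
have Punit : P \in unitmx := spectral_unit A.
have dreal : d \is a mxOver Num.real := hermitian_spectral_diag_real Aherm.
have eig i : d 0 i = f (complex.Re (d 0 i)) /\ complex.Re (d 0 i) <= l1.
  have de : d 0 i = ((complex.Re (d 0 i))%:C)%C by apply: Creal_eq; exact: (mxOverP dreal).
  split => //; apply: Hl1; apply: eig_map; rewrite -de.
  apply/eigenvalueP; exists (row i P).
    change (row i P *m A = d 0 i *: row i P). rewrite {1}HA !mulmxA -row_mul mulmxV // row1 -rowE row_diag_mx -scalemxAl -rowE //.
  apply/negP => /eqP H0.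
  have : row i (P *m invmx P) = 0 by rewrite row_mul H0 mul0mx.
  rewrite mulmxV // row1 => /matrixP /(_ 0 i); rewrite !mxE !eqxx /=.
  by move/eqP; rewrite oner_eq0.
pose v := map_mx f x.
have vconj : map_mx Num.conj v = v.
  by apply/matrixP => i j; rewrite !mxE conj_Creal ?fC_real.
pose w := P *m v.
have Pinv : invmx P = map_mx Num.conj (P^T) by rewrite invmx_unitary.
have wT : (map_mx Num.conj w)^T = v^T *m invmx P.
  rewrite map_mxM vconj trmx_mul Pinv; congr (_ *m _).
  by apply/matrixP => i j; rewrite !mxE.
have e1 : map_mx f (x^T *m M *m x) = (map_mx Num.conj w)^T *m diag_mx d *m w.
  rewrite wT !map_mxM -map_trmx -/v (_ : map_mx _ M = A) //.
  by rewrite HA /w !mulmxA.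
have e2 : map_mx f (x^T *m x) = (map_mx Num.conj w)^T *m w.
  rewrite wT !map_mxM -map_trmx -/v /w.
  by rewrite mulmxA -(mulmxA _ (invmx P)) mulVmx // mulmx1.
have {}e1 : f ((x^T *m M *m x) 0 0) = ((map_mx Num.conj w)^T *m diag_mx d *m w) 0 0.
  by rewrite -e1 [in RHS]mxE.
have {}e2 : f ((x^T *m x) 0 0) = ((map_mx Num.conj w)^T *m w) 0 0.
  by rewrite -e2 [in RHS]mxE.
rewrite /f in e1 e2; rewrite -(@lecR R) rmorphM /= e1 e2.
rewrite mul_mx_diag !mxE mulr_sumr.
apply: ler_sum => j _.
rewrite !mxE.
set z := \sum_j0 _.
case: (eig j) => de le; rewrite /f in de; rewrite de.
rewrite mulrAC [in leRHS]mulrC; apply: ler_wpM2l.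
  by rewrite mulrC mul_conjC_ge0.
by rewrite lecR.
Qed.

Lemma rayleigh_dot (R : rcfType) n (M : 'M[R]_n) (l1 : R) :
  M^T = M -> (forall mu, eigenvalue M mu -> mu <= l1) ->
  forall x : 'cV[R]_n, dotv x (M *m x) <= l1 * dotv x x.
Proof. by move=> Ms H x; rewrite /dotv mulmxA; apply: rayleigh. Qed.

Lemma key (R : rcfType) (n : nat) (M : 'M[R]_n) (beta : 'cV[R]_n)
  (gamma l1 ln r : R) (x0 un : 'cV[R]_n) (th : R) (x : 'cV[R]_n) :
  M^T = M -> (forall mu, eigenvalue M mu -> mu <= l1) -> 0 < l1 ->
  M *m un = ln *: un -> norm2 un = 1 -> 0 <= th ->
  inBall (x0 + th *: un) r x ->
  phi M beta gamma x <= phi M beta gamma x0 + ln * th ^+ 2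
     + 2 * th * (ln * dotv x0 un - dotv beta un + r * `|ln|)
     + (r ^+ 2 * l1 + 2 * r * norm2 (M *m x0 - beta)).
Proof.
move=> Ms Hl1 l1p Mu nu th0; rewrite /inBall.
set d := x - (x0 + th *: un) => nd.
have xe : x = x0 + th *: un + d by rewrite /d addrC subrK.
clearbody d.
have uu : dotv un un = 1 by rewrite -(norm2_sq un) nu expr1n.
have dd : dotv d d <= r ^+ 2.
  by rewrite -norm2_sq; have := norm2_ge0 d; nra.
set g := M *m x0 - beta.
have h1 : dotv g d <= norm2 g * r.
  have := cs_abs g d; have := ler_norm (dotv g d); have := norm2_ge0 g; have := norm2_ge0 d; nra.
have h2 : th * (ln * dotv d un) <= th * (`|ln| * r).
  apply: ler_wpM2l => //.
  have := cs_abs d un; rewrite nu mulr1 => hc.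
  apply: le_trans (ler_norm _) _; rewrite normrM; apply: ler_wpM2l => //.
  exact: le_trans hc nd.
have h3 : dotv d (M *m d) <= l1 * r ^+ 2.
  apply: le_trans (rayleigh_dot Ms Hl1 d) _; by rewrite ler_wpM2l // ltW.
have e1 : dotv x0 (M *m d) = dotv (M *m x0) d by rewrite dotvM.
have e2 : dotv d (M *m x0) = dotv (M *m x0) d by rewrite dotvC.
have e3 : dotv un (M *m d) = ln * dotv d un by rewrite dotvM // Mu dotvZl dotvC.
have e4 : dotv un (M *m x0) = ln * dotv x0 un by rewrite dotvM // Mu dotvZl dotvC.
have e5 : dotv un d = dotv d un by rewrite dotvC.
have e6 : dotv un x0 = dotv x0 un by rewrite dotvC.
have e7 : dotv g d = dotv (M *m x0) d - dotv beta d by rewrite /g dotvDl dotvNl.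
have e8 : dotv x0 (M *m un) = ln * dotv x0 un by rewrite Mu dotvZr.
have e9 : dotv d (M *m un) = ln * dotv d un by rewrite Mu dotvZr.
have e10 : dotv un (M *m un) = ln by rewrite Mu dotvZr uu mulr1.
rewrite xe /phi !mulmxDr -!scalemxAr !(dotvDl, dotvDr, dotvZl, dotvZr).
rewrite ?e1 ?e2 ?e3 ?e4 ?e5 ?e6 ?e8 ?e9 ?e10 ?uu.
rewrite -/g in h1; move: h1; rewrite e7.
nra.
Qed.

Theorem proposition5p3 (R : rcfType) (n : nat) (M : 'M[R]_n) (beta : 'cV[R]_n)
  (gamma l1 ln r : R) (x0 un : 'cV[R]_n) :
  M^T = M ->
  eigenvalue M l1 -> (forall mu, eigenvalue M mu -> mu <= l1) ->
  eigenvalue M ln -> (forall mu, eigenvalue M mu -> ln <= mu) ->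
  0 < l1 -> ln <= 0 ->
  inQ M beta gamma x0 -> 0 < r ->
  M *m un = ln *: un -> norm2 un = 1 ->
  (* (i) *)
  (ln = 0 -> 0 < dotv beta un ->
    forall theta : R,
      (r ^+ 2 * l1 + 2 * r * norm2 (M *m x0 - beta)) / (2 * dotv beta un) <= theta ->
      forall x, inBall (x0 + theta *: un) r x -> inQ M beta gamma x)
  /\
  (* (ii) *)
  (ln < 0 -> 0 <= dotv beta un ->
    let b0 := ln * dotv x0 un - dotv beta un + r * `|ln| in
    forall theta : R,
      (- b0 - Num.sqrt (b0 ^+ 2 - ln * (r ^+ 2 * l1 + 2 * r * norm2 (M *m x0 - beta)))) / ln
        <= theta ->
      forall x, inBall (x0 + theta *: un) r x -> inQ M beta gamma x).
Proof.
move=> Ms _ Hl1 _ _ l1p ln0 Hx0 r0 Mu nu.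
have ng := norm2_ge0 (M *m x0 - beta).
set C := r ^+ 2 * l1 + 2 * r * norm2 (M *m x0 - beta).
have C0 : 0 <= C.
  have r0' := ltW r0; have l0' := ltW l1p; rewrite /C; nra.
rewrite /inQ in Hx0 *.
split.
- move=> ln0' bu th hth x hx.
  have bu2 : 0 < 2 * dotv beta un by rewrite mulr_gt0.
  have th0 : 0 <= th by apply: le_trans hth; rewrite divr_ge0 // ltW.
  move: hth; rewrite ler_pdivrMr // => hth.
  have := @key R n M beta gamma l1 ln r x0 un th x Ms Hl1 l1p Mu nu th0 hx.
  rewrite -/C ln0' normr0; nra.
- move=> lnn bu0 th hth x hx.
  set b0 := ln * dotv x0 un - dotv beta un + r * `|ln| in hth.
  have eb : b0 = ln * dotv x0 un - dotv beta un + r * `|ln| by [].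
  clearbody b0.
  have d0 : 0 <= b0 ^+ 2 - ln * C by nra.
  move: hth; set s := Num.sqrt _ => hth.
  have s0 : 0 <= s := sqrtr_ge0 _.
  have ss : s ^+ 2 = b0 ^+ 2 - ln * C by rewrite sqr_sqrtr.
  move: hth; rewrite ler_ndivrMr // => hth.
  have sb : - b0 - s <= 0 by nra.
  have th0 : 0 <= th by nra.
  have := @key R n M beta gamma l1 ln r x0 un th x Ms Hl1 l1p Mu nu th0 hx.
  rewrite -/C -eb => hk.
  have q : s ^+ 2 <= (ln * th + b0) ^+ 2 by nra.
  have hE : 0 <= ln * (ln * th ^+ 2 + 2 * th * b0 + C) by nra.
  move: hE; rewrite nmulr_rge0 // => hE.
  lra.
Qed.
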